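(* Let $I,J\subset\mathbb{R}$ be intervals and $f:I\times J\to I$, $f_\lambda(x)=f(x,\lambda)$, a $C^1$ family of $C^2$ interval maps; fix $\lambda_0\in J$. Suppose $(x,\lambda_0)$ is a chain explosion point for which there is $\delta>0$ such that no point of $B_\delta(x)$ is chain recurrent for $f_\lambda$ for all $\lambda<\lambda_0$, while $x$ is chain recurrent for $f_{\lambda_0}$. Then $f_{\lambda_0}(x)$ is chain recurrent for $f_{\lambda_0}$. Moreover, if $x_{-1}$ is a preimage of $x$ (i.e. $f_{\lambda_0}(x_{-1})=x$), then there is $\delta_{-1}>0$ such that no point of $B_{\delta_{-1}}(x_{-1})$ is chain recurrent for $f_\lambda$ for all $\lambda<\lambda_0$.
   Context: For a map $g$, an $\epsilon$-chain from $x$ to $y$ is a finite sequence $z_0=x,z_1,\dots,z_N=y$ with $|g(z_{n-1})-z_n|<\epsilon$ for all $n$. A point $x$ is chain recurrent for $g$ if for every $\epsilon>0$ there is an $\epsilon$-chain from $x$ to itself with $N>0$. A point $(x,\lambda_0)$ is a chain explosion point if $x$ is chain recurrent for $f_{\lambda_0}$ but there is a neighborhood $N$ of $x$ such that on one side of $\lambda_0$ no point of $N$ is chain recurrent for $f_\lambda$. $B_\delta(x)$ denotes the open ball of radius $\delta$ about $x$. *)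

(* Defs.v *)
From Stdlib Require Import Reals Lra Lia.
Open Scope R_scope.

Definition is_interval (I : R -> Prop) : Prop :=
  (forall a b c, I a -> I c -> a <= b <= c -> I b) /\
  (exists a b, a < b /\ I a /\ I b).

Definition continuous_on (D : R -> Prop) (g : R -> R) : Prop :=
  forall x, D x -> forall eps, 0 < eps -> exists delta, 0 < delta /\
    forall y, D y -> Rabs (y - x) < delta -> Rabs (g y - g x) < eps.

Definition has_deriv_on (D : R -> Prop) (g g' : R -> R) : Prop :=
  forall x, D x -> forall eps, 0 < eps -> exists delta, 0 < delta /\
    forall y, D y -> Rabs (y - x) < delta ->
      Rabs (g y - g x - g' x * (y - x)) <= eps * Rabs (y - x).

Definition C2_on (D : R -> Prop) (g : R -> R) : Prop :=
  exists g1 g2 : R -> R,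
    has_deriv_on D g g1 /\ has_deriv_on D g1 g2 /\ continuous_on D g2.

Definition continuous_on2 (I J : R -> Prop) (h : R -> R -> R) : Prop :=
  forall x l, I x -> J l -> forall eps, 0 < eps -> exists delta, 0 < delta /\
    forall y m, I y -> J m -> Rabs (y - x) < delta -> Rabs (m - l) < delta ->
      Rabs (h y m - h x l) < eps.

Definition C1_on2 (I J : R -> Prop) (h : R -> R -> R) : Prop :=
  exists hx hl : R -> R -> R,
    continuous_on2 I J hx /\ continuous_on2 I J hl /\
    forall x l, I x -> J l -> forall eps, 0 < eps -> exists delta, 0 < delta /\
      forall y m, I y -> J m -> Rabs (y - x) < delta -> Rabs (m - l) < delta ->
        Rabs (h y m - h x l - hx x l * (y - x) - hl x l * (m - l))
          <= eps * (Rabs (y - x) + Rabs (m - l)).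

Definition eps_chain (D : R -> Prop) (g : R -> R) (eps : R) (x y : R)
    (N : nat) (z : nat -> R) : Prop :=
  z 0%nat = x /\ z N = y /\
  (forall n, (n <= N)%nat -> D (z n)) /\
  (forall n, (1 <= n <= N)%nat -> Rabs (g (z (n - 1)%nat) - z n) < eps).

Definition chain_recurrent (D : R -> Prop) (g : R -> R) (x : R) : Prop :=
  D x /\ forall eps, 0 < eps ->
    exists (N : nat) (z : nat -> R), (0 < N)%nat /\ eps_chain D g eps x x N z.

(* Main.v *)
Require Import Defs.
From Stdlib Require Import Reals Lra Lia.
Open Scope R_scope.

Lemma abs_sub_lt a b p q : Rabs a < p -> Rabs b < q -> Rabs (a - b) < p + q.
Proof.
  unfold Rabs; repeat destruct Rcase_abs; lra.
Qed.

Lemma cr_image (D : R -> Prop) (g : R -> R) (y : R) :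
  (forall z, D z -> D (g z)) ->
  (forall e, 0 < e -> exists d, 0 < d /\ forall u, D u -> Rabs (u - g y) < d ->
      Rabs (g u - g (g y)) < e) ->
  chain_recurrent D g y -> chain_recurrent D g (g y).
Proof.
  intros HD Hc [Hy Hcr]. split; [now apply HD|].
  intros e He.
  destruct (Hc (e/2)) as [d [Hd Hdc]]; [lra|].
  destruct (Hcr (Rmin d (e/2))) as [N [z [HN [H0 [HNy [HDz Hst]]]]]].
  { apply Rmin_pos; lra. }
  assert (Hm1 : Rmin d (e/2) <= d) by apply Rmin_l.
  assert (Hm2 : Rmin d (e/2) <= e/2) by apply Rmin_r.
  exists N, (fun n => if Nat.eqb n 0 then g y else if Nat.ltb n N then z (S n) else g y).
  split; [exact HN|].
  assert (Hz1 : Rabs (g (z 1%nat) - g (g y)) < e/2).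
  { apply Hdc. apply HDz; lia.
    assert (H1 := Hst 1%nat ltac:(lia)). simpl in H1. rewrite H0 in H1.
    rewrite Rabs_minus_sym. lra. }
  split; [|split; [|split]].
  - reflexivity.
  - destruct (Nat.eqb_spec N 0); [lia|]. destruct (Nat.ltb_spec N N); [lia|]. reflexivity.
  - intros n Hn. destruct (Nat.eqb_spec n 0); [apply HD; exact Hy|].
    destruct (Nat.ltb_spec n N); [apply HDz; lia| apply HD; exact Hy].
  - intros n Hn.
    destruct (Nat.eqb_spec n 1) as [E1|E1].
    + subst n. simpl.
      destruct (Nat.ltb_spec 1 N).
      * assert (H2 := Hst 2%nat ltac:(lia)). simpl in H2.
        replace (g (g y) - z 2%nat) with ((g (z 1%nat) - z 2%nat) - (g (z 1%nat) - g (g y))) by ring.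
        assert (Hab := abs_sub_lt _ _ _ _ H2 Hz1). lra.
      * assert (N = 1%nat) by lia. subst N. rewrite HNy in Hz1.
        rewrite Rabs_minus_sym. lra.
    + destruct (Nat.eqb_spec n 0); [lia|].
      destruct (Nat.eqb_spec (n-1) 0); [lia|].
      destruct (Nat.ltb_spec (n-1) N); [|lia].
      replace (S (n-1)) with n by lia.
      destruct (Nat.ltb_spec n N).
      * assert (H2 := Hst (S n) ltac:(lia)).
        replace (S n - 1)%nat with n in H2 by lia. lra.
      * assert (n = N) by lia. subst n. rewrite HNy.
        rewrite Rminus_diag, Rabs_R0. lra.
Qed.

Lemma C1_cont (I J : R -> Prop) (h : R -> R -> R) : C1_on2 I J h -> continuous_on2 I J h.
Proof.
  intros [hx [hl [_ [_ Hd]]]] x l Ix Jl e He.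
  destruct (Hd x l Ix Jl 1 ltac:(lra)) as [d [Hd0 Hd1]].
  set (K := Rabs (hx x l) + Rabs (hl x l) + 1).
  assert (HK : 0 < K) by (unfold K; pose proof (Rabs_pos (hx x l)); pose proof (Rabs_pos (hl x l)); lra).
  exists (Rmin d (e / (2*K))). split.
  { apply Rmin_pos; [lra|]. apply Rdiv_lt_0_compat; lra. }
  intros y m Iy Jm Hy Hm.
  assert (Hy1 : Rabs (y - x) < d) by (eapply Rlt_le_trans; [exact Hy| apply Rmin_l]).
  assert (Hm1 : Rabs (m - l) < d) by (eapply Rlt_le_trans; [exact Hm| apply Rmin_l]).
  assert (Hy2 : Rabs (y - x) < e/(2*K)) by (eapply Rlt_le_trans; [exact Hy| apply Rmin_r]).
  assert (Hm2 : Rabs (m - l) < e/(2*K)) by (eapply Rlt_le_trans; [exact Hm| apply Rmin_r]).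
  specialize (Hd1 y m Iy Jm Hy1 Hm1).
  set (A := h y m - h x l - hx x l * (y - x) - hl x l * (m - l)) in Hd1.
  replace (h y m - h x l) with (A + hx x l * (y - x) + hl x l * (m - l)) by (unfold A; ring).
  assert (T1 : Rabs (A + hx x l * (y - x) + hl x l * (m - l)) <=
     Rabs A + Rabs (hx x l) * Rabs (y - x) + Rabs (hl x l) * Rabs (m - l)).
  { rewrite <- !Rabs_mult. eapply Rle_trans; [apply Rabs_triang|].
    pose proof (Rabs_triang A (hx x l * (y - x))). lra. }
  assert (E : e = K * (2 * (e / (2*K)))) by (field; lra).
  assert (0 <= Rabs (hx x l) * Rabs (y - x)) by (apply Rmult_le_pos; apply Rabs_pos).
  assert (Rabs (hx x l) * Rabs (y - x) <= Rabs (hx x l) * (e/(2*K)))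
    by (apply Rmult_le_compat_l; [apply Rabs_pos| lra]).
  assert (Rabs (hl x l) * Rabs (m - l) <= Rabs (hl x l) * (e/(2*K)))
    by (apply Rmult_le_compat_l; [apply Rabs_pos| lra]).
  assert (0 <= Rabs (y - x)) by apply Rabs_pos.
  assert (0 <= Rabs (m - l)) by apply Rabs_pos.
  assert (Rabs (y - x) + Rabs (m - l) < 2 * (e / (2*K))) by lra.
  assert (K * (Rabs (y - x) + Rabs (m - l)) < K * (2 * (e / (2*K))))
    by (apply Rmult_lt_compat_l; lra).
  unfold K in *. nra.
Qed.

Theorem mainTheorem2
  (I J : R -> Prop) (f : R -> R -> R) (lam0 x : R)
  (HI : is_interval I) (HJ : is_interval J)
  (Hmaps : forall y l, I y -> J l -> I (f y l))
  (HC1 : C1_on2 I J f)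
  (HC2 : forall l, J l -> C2_on I (fun y => f y l))
  (Hlam0 : J lam0) (Hx : I x)
  (* (x, lam0) is a chain explosion point, with the explosion from below *)
  (Hcr : chain_recurrent I (fun y => f y lam0) x)
  (Hexpl : exists delta eta, 0 < delta /\ 0 < eta /\
     forall l, J l -> lam0 - eta < l < lam0 ->
       forall y, I y -> Rabs (y - x) < delta ->
         ~ chain_recurrent I (fun z => f z l) y) :
  chain_recurrent I (fun y => f y lam0) (f x lam0) /\
  (forall xm1, I xm1 -> f xm1 lam0 = x ->
     exists delta1 eta1, 0 < delta1 /\ 0 < eta1 /\
       forall l, J l -> lam0 - eta1 < l < lam0 ->
         forall y, I y -> Rabs (y - xm1) < delta1 ->
           ~ chain_recurrent I (fun z => f z l) y).
Proof.
  assert (Hc := C1_cont I J f HC1).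
  assert (Himg : forall l y, J l -> I y -> chain_recurrent I (fun z => f z l) y ->
            chain_recurrent I (fun z => f z l) (f y l)).
  { intros l y Jl Iy Hy.
    apply (cr_image I (fun z => f z l) y); [intros; now apply Hmaps| |exact Hy].
    intros e He. destruct (Hc (f y l) l (Hmaps y l Iy Jl) Jl e He) as [d [Hd Hd1]].
    exists d. split; [exact Hd|]. intros u Iu Hu. apply Hd1; try assumption.
    rewrite Rminus_diag, Rabs_R0. exact Hd. }
  split; [now apply Himg|].
  intros xm1 Ixm1 Hfx.
  destruct Hexpl as [delta [eta [Hdelta [Heta Hno]]]].
  destruct (Hc xm1 lam0 Ixm1 Hlam0 delta Hdelta) as [d [Hd Hd1]].
  exists d, (Rmin eta d). split; [exact Hd|]. split; [apply Rmin_pos; lra|].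
  intros l Jl Hl y Iy Hy Hcry.
  assert (Hm1 : Rmin eta d <= eta) by apply Rmin_l.
  assert (Hm2 : Rmin eta d <= d) by apply Rmin_r.
  apply (Hno l Jl ltac:(lra) (f y l) (Hmaps y l Iy Jl)).
  - rewrite <- Hfx. apply Hd1; auto. rewrite Rabs_left; lra.
  - now apply Himg.
Qed.
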